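(* Let $k$ be a field of characteristic $0$, let $A$ be a $k$-algebra, let $\mathfrak{p}$ be a prime ideal of $A$, and let $\alpha\colon A\to K[t]/(t^{m+1})$ be an $m$-jet of $A$ centered at $\mathfrak{p}$ and valued in a field extension $K/k$. Suppose that for some field extension $E/K$ there is a $k$-algebra map $A\to E[t]/(t^{m+2})$ whose reduction modulo $t^{m+1}$ equals $\alpha$ composed with $K[t]/(t^{m+1})\to E[t]/(t^{m+1})$. Then there is a $k$-algebra map $\beta\colon A\to K[t]/(t^{m+2})$ whose reduction modulo $t^{m+1}$ equals $\alpha$.
   Context: An $m$-jet of a $k$-algebra $A$ valued in $K$ is a $k$-algebra homomorphism $A\to K[t]/(t^{m+1})$; its center is the kernel of its reduction modulo $t$, a prime ideal. *)

(* Defs.v *)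
From mathcomp Require Import all_boot all_algebra.
Set Implicit Arguments. Unset Strict Implicit. Unset Printing Implicit Defensive.
Import GRing.Theory.
Local Open Scope ring_scope.

(* The truncated polynomial ring K[t]/(t^n) is modelled concretely by the
   polynomials of size <= n (i.e. degree < n), with multiplication followed by
   truncation [take_poly n]. *)
Definition trunc_alg_hom (k : fieldType) (A : comAlgType k) (K : fieldType)
    (iota : {rmorphism k -> K}) (n : nat) (f : A -> {poly K}) : Prop :=
  [/\ forall a, (size (f a) <= n)%N,
      forall a b, f (a + b) = f a + f b,
      forall (c : k) a, f (c *: a) = iota c *: f a,
      f 1 = take_poly n 1 &
      forall a b, f (a * b) = take_poly n (f a * f b)].

Definition jet (k : fieldType) (A : comAlgType k) (K : fieldType)
    (iota : {rmorphism k -> K}) (m : nat) (f : A -> {poly K}) : Prop :=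
  trunc_alg_hom iota m.+1 f.

Definition jet_center (A : Type) (K : fieldType) (f : A -> {poly K}) : pred A :=
  fun a => (f a)`_0 == 0.

Definition prime_ideal (A : comNzRingType) (p : pred A) : Prop :=
  [/\ 0 \in p,
      forall a b, a \in p -> b \in p -> a + b \in p,
      forall a b, b \in p -> a * b \in p,
      1 \notin p &
      forall a b, a * b \in p -> a \in p \/ b \in p].

(* Main.v *)
Require Import Defs.
From mathcomp Require Import all_boot all_algebra.
From mathcomp Require Import boolp classical_sets.
From mathcomp Require Import ring zify.
Import GRing.Theory.
Local Open Scope ring_scope.
Local Open Scope classical_set_scope.

Lemma proj_exists (K E : fieldType) (f : {rmorphism K -> E}) :
  exists pi : E -> K, (forall x y, pi (x + y) = pi x + pi y) /\
    (forall c x, pi (f c * x) = c * pi x) /\ (forall c, pi (f c) = c).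
Proof.
pose P := fun V : set E => [/\ (forall x y, V x -> V y -> V (x + y)),
   (forall c x, V x -> V (f c * x)) & (forall d, V (f d) -> d = 0)].
have [V [[Vadd Vsc Vdis] Vmax]] : exists V, P V /\ forall B, V `<` B -> ~ P B.
  apply: Zorn_bigcup => F FP Ftot; split.
  - move=> x y [X FX Xx] [Y FY Yy]; case: (Ftot X Y FX FY) => [XY|YX].
      by exists Y => //; case: (FP Y FY) => + _ _; apply => //; exact: XY.
    by exists X => //; case: (FP X FX) => + _ _; apply => //; exact: YX.
  - by move=> c x [X FX Xx]; exists X => //; case: (FP X FX) => _ + _; apply.
  - by move=> d [X FX Xd]; case: (FP X FX) => _ _; apply.
pose V0 := fun x => V x \/ x = 0.
have V0add x y : V0 x -> V0 y -> V0 (x + y).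
  case=> [Vx|->]; case=> [Vy|->]; rewrite ?addr0 ?add0r; rewrite /V0; auto.
have V0sc c x : V0 x -> V0 (f c * x).
  by case=> [Vx|->]; [left; apply: Vsc | right; rewrite mulr0].
have V0dis d : V0 (f d) -> d = 0.
  by case=> [/Vdis //|/eqP]; rewrite fmorph_eq0 => /eqP.
have V0N x : V0 x -> V0 (- x).
  by move=> /(V0sc (-1)); rewrite rmorphN rmorph1 mulN1r.
have decomp x : exists d, V0 (x - f d).
  case: (pselect (exists d, V0 (x - f d))) => // hx; exfalso.
  pose W := [set y | exists c v, V0 v /\ y = v + f c * x].
  apply: (Vmax W).
    split.
      by move=> y Vy; exists 0, y; split; [left|rewrite rmorph0 mul0r addr0].
    move=> WV; apply: hx; exists 0; rewrite rmorph0 subr0; left; apply: WV.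
    by exists 1, 0; split; [right|rewrite rmorph1 mul1r add0r].
  split.
  - move=> _ _ [c1 [v1 [V1 ->]]] [c2 [v2 [V2 ->]]].
    exists (c1 + c2), (v1 + v2); split; first exact: V0add.
    by rewrite rmorphD mulrDl addrACA.
  - move=> c _ [c1 [v1 [V1 ->]]]; exists (c * c1), (f c * v1); split; first exact: V0sc.
    by rewrite mulrDr rmorphM mulrA.
  - move=> d [c [v [Vv Hd]]].
    have [c0|cn0] := eqVneq c 0.
      by move: Hd; rewrite c0 rmorph0 mul0r addr0 => Hd; apply: V0dis; rewrite Hd.
    exfalso; apply: hx; exists (d / c).
    have -> : x - f (d / c) = f (- c^-1) * v.
      have fc : f c != 0 by rewrite fmorph_eq0.
      rewrite rmorphM fmorphV rmorphN Hd.
      by field.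
    exact: V0sc.
have uniq x d1 d2 : V0 (x - f d1) -> V0 (x - f d2) -> d1 = d2.
  move=> h1 h2; apply/eqP; rewrite -subr_eq0; apply/eqP/V0dis.
  have -> : f (d1 - d2) = (x - f d2) + - (x - f d1) by rewrite rmorphB; ring.
  by apply: V0add => //; apply: V0N.
pose pi x := projT1 (cid (decomp x)).
have piP x : V0 (x - f (pi x)) by rewrite /pi; case: cid.
exists pi; split; [|split].
- move=> x y; apply: (uniq (x + y)); first exact: piP.
  have -> : x + y - f (pi x + pi y) = (x - f (pi x)) + (y - f (pi y)) by rewrite rmorphD; ring.
  by apply: V0add; apply: piP.
- move=> c x; apply: (uniq (f c * x)); first exact: piP.
  have -> : f c * x - f (c * pi x) = f c * (x - f (pi x)) by rewrite rmorphM; ring.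
  by apply: V0sc; apply: piP.
- move=> c; apply: (uniq (f c)); first exact: piP.
  by rewrite subrr; right.
Qed.

Local Close Scope classical_set_scope.

Theorem proposition3p8
  (k : fieldType) (hchar : [pchar k] =i pred0)
  (A : comAlgType k) (p : pred A) (hp : prime_ideal p)
  (K : fieldType) (iota : {rmorphism k -> K})
  (m : nat) (alpha : A -> {poly K})
  (halpha : jet iota m alpha)
  (hcenter : jet_center alpha =i p)
  (E : fieldType) (iotaE : {rmorphism K -> E})
  (gamma : A -> {poly E})
  (hgamma : trunc_alg_hom (iotaE \o iota) m.+2 gamma)
  (hlift : forall a, take_poly m.+1 (gamma a) = map_poly iotaE (alpha a)) :
  exists beta : A -> {poly K},
    trunc_alg_hom iota m.+2 beta /\
    forall a, take_poly m.+1 (beta a) = alpha a.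
Proof.
have [pi [piD [piM piC]]] := @proj_exists K E iotaE.
have pi0 : pi 0 = 0 by rewrite -(rmorph0 iotaE) piC.
have piS (I : Type) (r : seq I) (P : pred I) (F : I -> E) :
    pi (\sum_(i <- r | P i) F i) = \sum_(i <- r | P i) pi (F i).
  exact: (big_morph pi piD pi0).
case: halpha => aS aD aZ a1 aM; case: hgamma => gS gD gZ g1 gM.
have low a i : (i <= m)%N -> (gamma a)`_i = iotaE (alpha a)`_i.
  move=> hi; have := congr1 (fun q : {poly E} => q`_i) (hlift a).
  by rewrite /= coef_take_poly coef_map /= ltnS hi.
pose beta a := \poly_(i < m.+2) pi (gamma a)`_i.
have cb a i : (beta a)`_i = if (i < m.+2)%N then pi (gamma a)`_i else 0.
  exact: coef_poly.
have cbl a i : (i <= m)%N -> (beta a)`_i = (alpha a)`_i.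
  move=> hi; rewrite cb low // piC; have -> : (i < m.+2)%N by lia.
  by [].
exists beta; split; first split.
- by move=> a; apply: size_poly.
- move=> a b; apply/polyP => i; rewrite coefD !cb; case: ifP => _; rewrite ?addr0 //.
  by rewrite gD coefD piD.
- move=> c a; apply/polyP => i; rewrite coefZ !cb; case: ifP => _; rewrite ?mulr0 //.
  by rewrite gZ coefZ /= piM.
- apply/polyP => i; rewrite cb g1 !coef_take_poly; case: ifP => // hi.
  by rewrite hi !coef1 -(rmorph_nat iotaE) piC.
- move=> a b; apply/polyP => i; rewrite cb coef_take_poly; case: ifP => // hi.
  rewrite gM coef_take_poly hi !coefM piS; apply: eq_bigr => [[j /= hj]] _.
  rewrite !cb.
  have -> : (j < m.+2)%N by lia.
  have -> : (i - j < m.+2)%N by lia.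
  case: (leqP j m) => hjm.
    by rewrite low // piM piC.
  have hij : (i - j <= m)%N by lia.
  by rewrite (low b (i - j)%N) // mulrC piM piC mulrC.
- move=> a; apply/polyP => i; rewrite coef_take_poly; case: ifP => hi.
    by rewrite cbl.
  by rewrite nth_default // (leq_trans (aS a)) // leqNgt hi.
Qed.
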